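(* Let $\mathcal{H}_\mathrm{S}\cong\mathbb{C}^d$ be a finite-dimensional quantum system and let $\mathcal{E}_1,\mathcal{E}_2$ be completely positive trace-preserving (CPT) maps on the operators on $\mathcal{H}_\mathrm{S}$. Let $\chi_1=\chi[\mathcal{E}_1]$ and $\chi_2=\chi[\mathcal{E}_2]$ be their Choi states, and let $E$ be an entanglement measure and $E^\sharp$ the corresponding entanglement of assistance (as defined in the context). If $$E^\sharp[\chi_1] < E[\chi_2],$$ then the dynamics $\mathcal{D}=(\mathcal{E}_1,\mathcal{E}_2)$ requires truly quantum memory; that is, there exist no Kraus decomposition $\{M_i\}$ of $\mathcal{E}_1$ (i.e. $\mathcal{E}_1[\rho]=\sum_i M_i\rho M_i^\dagger$ for all $\rho$) and CPT maps $\Phi_i$ on the operators on $\mathcal{H}_\mathrm{S}$ such that $\mathcal{E}_2[\rho]=\sum_i \Phi_i[M_i\rho M_i^\dagger]$ for all $\rho$.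
   Context: Choi state: let $\mathcal{H}_\mathrm{A}\cong\mathbb{C}^d$ be an ancilla, $\{\ket{j_\mathrm{S}}\}$, $\{\ket{j_\mathrm{A}}\}$ orthonormal bases, and $\ket{\phi^+}=\frac{1}{\sqrt d}\sum_{j=0}^{d-1}\ket{j_\mathrm{S}}\ket{j_\mathrm{A}}$. For a CPT map $\mathcal{E}$ on $\mathrm{S}$, its Choi state is $\chi[\mathcal{E}]=(\mathcal{E}\otimes\mathbb{1})(\ket{\phi^+}\bra{\phi^+})$, a state on $\mathcal{H}_\mathrm{S}\otimes\mathcal{H}_\mathrm{A}$. Entanglement measure: $E$ is an entanglement monotone on bipartite states of $\mathrm{S}\mathrm{A}$ (e.g. entanglement of formation or concurrence) whose value on a mixed state is the convex roof of its pure-state values, $E[\rho]=\min_{\{p_k,\ket{\varphi_k}\}}\sum_k p_kE[\ket{\varphi_k}]$ over all pure-state decompositions $\rho=\sum_k p_k\ket{\varphi_k}\bra{\varphi_k}$, and which does not increase under local CPT maps acting on $\mathrm{S}$. Entanglement of assistance: $E^\sharp[\chi]=\max_{\{p_k,\ket{\psi_k}\}}\sum_k p_kE[\ket{\psi_k}]$, the maximum over all pure-state decompositions $\chi=\sum_kp_k\ket{\psi_k}\bra{\psi_k}$. A dynamics $(\mathcal{E}_1,\mathcal{E}_2)$ is said to be realizable with classical memory iff there exist a Kraus decomposition $\{M_i\}$ of $\mathcal{E}_1$ and CPT maps $\Phi_i$ with $\mathcal{E}_2[\rho]=\sum_i\Phi_i[M_i\rho M_i^\dagger]$; otherwise it requires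 truly quantum memory. *)

(* Defs.v *)
From mathcomp Require Import all_boot all_algebra.
From mathcomp Require Import classical_sets reals constructive_ereal ereal.
From mathcomp.real_closed Require Import complex mxtens.

Set Implicit Arguments.
Unset Strict Implicit.
Unset Printing Implicit Defensive.

Import GRing.Theory Num.Theory.
Local Open Scope ring_scope.
Local Open Scope complex_scope.

Section Quantum.
Variable R : realType.
Local Notation C := (R[i]).

Definition dag m n (A : 'M[C]_(m, n)) : 'M[C]_(n, m) := (map_mx (fun x => x^*) A)^T.

Definition psd n (A : 'M[C]_n) : Prop :=
  forall v : 'cV[C]_n, 0 <= (dag v *m A *m v) 0 0.

Definition density n (A : 'M[C]_n) : Prop := psd A /\ \tr A = 1.

(* block (a,b) of an operator on C^d (x) C^n w.r.t. the second factor *)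
Definition blk d n (a b : 'I_n) (X : 'M[C]_(d * n)) : 'M[C]_d :=
  \matrix_(i, j) X (mxtens_index (i, a)) (mxtens_index (j, b)).

(* (L (x) id_n) : the map L acting on the first tensor factor *)
Definition ampl d n (L : 'M[C]_d -> 'M[C]_d) (X : 'M[C]_(d * n)) : 'M[C]_(d * n) :=
  \sum_(a < n) \sum_(b < n) (L (blk a b X) *t (delta_mx a b : 'M[C]_n)).

Definition linear_map d (L : 'M[C]_d -> 'M[C]_d) : Prop :=
  forall (c : C) (A B : 'M[C]_d), L (c *: A + B) = c *: L A + L B.

Definition completely_positive d (L : 'M[C]_d -> 'M[C]_d) : Prop :=
  forall (n : nat) (X : 'M[C]_(d * n)), psd X -> psd (ampl L X).

Definition trace_preserving d (L : 'M[C]_d -> 'M[C]_d) : Prop :=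
  forall A : 'M[C]_d, \tr (L A) = \tr A.

Definition CPT d (L : 'M[C]_d -> 'M[C]_d) : Prop :=
  [/\ linear_map L, completely_positive L & trace_preserving L].

Definition phiplus d : 'cV[C]_(d * d) :=
  ((Num.sqrt (d%:R : R))^-1)%:C *:
    \sum_(j < d) ((delta_mx j 0 : 'cV[C]_d) *t (delta_mx j 0 : 'cV[C]_d)).

Definition proj n (psi : 'cV[C]_n) : 'M[C]_n := psi *m dag psi.

Definition choi d (L : 'M[C]_d -> 'M[C]_d) : 'M[C]_(d * d) :=
  ampl L (proj (phiplus d)).

Definition pure_decomp N (rho : 'M[C]_N) n (p : 'I_n -> R) (psi : 'I_n -> 'cV[C]_N) : Prop :=
  [/\ forall k, 0 <= p k, \sum_(k < n) p k = 1,
      forall k, dag (psi k) *m psi k = 1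
    & rho = \sum_(k < n) (p k)%:C *: proj (psi k)].

Definition decomp_value N (E : 'M[C]_N -> R) n (p : 'I_n -> R) (psi : 'I_n -> 'cV[C]_N) : R :=
  \sum_(k < n) p k * E (proj (psi k)).

Definition convex_roof N (E : 'M[C]_N -> R) : Prop :=
  forall rho : 'M[C]_N, density rho ->
    (forall n p psi, @pure_decomp N rho n p psi -> E rho <= decomp_value E p psi) /\
    (exists n p psi, @pure_decomp N rho n p psi /\ E rho = decomp_value E p psi).

Definition local_monotone d (E : 'M[C]_(d * d) -> R) : Prop :=
  forall L : 'M[C]_d -> 'M[C]_d, CPT L ->
    forall rho : 'M[C]_(d * d), density rho -> E (ampl L rho) <= E rho.

(* entanglement of assistance: max (here: supremum, in extended reals) over
   pure-state decompositions *)
Definition Esharp N (E : 'M[C]_N -> R) (chi : 'M[C]_N) : \bar R :=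
  ereal_sup [set x : \bar R | exists n p psi,
     @pure_decomp N chi n p psi /\ x = (decomp_value E p psi)%:E].

Definition kraus d (L : 'M[C]_d -> 'M[C]_d) n (M : 'I_n -> 'M[C]_d) : Prop :=
  forall rho : 'M[C]_d, density rho -> L rho = \sum_(i < n) M i *m rho *m dag (M i).

Definition classical_memory d (E1 E2 : 'M[C]_d -> 'M[C]_d) : Prop :=
  exists n (M : 'I_n -> 'M[C]_d) (Phi : 'I_n -> 'M[C]_d -> 'M[C]_d),
    [/\ kraus E1 M, forall i, CPT (Phi i)
      & forall rho : 'M[C]_d, density rho ->
          E2 rho = \sum_(i < n) Phi i (M i *m rho *m dag (M i))].

End Quantum.

(* Main.v *)
Require Import Defs.
From mathcomp Require Import all_boot all_algebra.
From mathcomp Require Import classical_sets reals constructive_ereal ereal.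
From mathcomp.real_closed Require Import complex mxtens.
From mathcomp Require Import ring.
Import GRing.Theory Num.Theory.
From mathcomp Require Import order.
Import Order.TTheory.
Local Open Scope ring_scope.
Local Open Scope complex_scope.
Set Implicit Arguments. Unset Strict Implicit. Unset Printing Implicit Defensive.

Section Q.
Variable R : realType.
Local Notation C := (R[i]).

Lemma dagE m n (A : 'M[C]_(m, n)) i j : dag A i j = conjc (A j i).
Proof. by rewrite !mxE. Qed.

Lemma dagD m n (A B : 'M[C]_(m, n)) : dag (A + B) = dag A + dag B.
Proof. by apply/matrixP=> i j; rewrite !mxE rmorphD. Qed.

Lemma dagZ m n c (A : 'M[C]_(m, n)) : dag (c *: A) = conjc c *: dag A.
Proof. by apply/matrixP=> i j; rewrite !mxE rmorphM. Qed.

Lemma dagN m n (A : 'M[C]_(m, n)) : dag (- A) = - dag A.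
Proof. by apply/matrixP=> i j; rewrite !mxE rmorphN. Qed.

Lemma dag0 m n : dag (0 : 'M[C]_(m, n)) = 0.
Proof. by apply/matrixP=> i j; rewrite !mxE rmorph0. Qed.

Lemma dagM m n p (A : 'M[C]_(m, n)) (B : 'M[C]_(n, p)) : dag (A *m B) = dag B *m dag A.
Proof.
apply/matrixP=> i j; rewrite !mxE rmorph_sum; apply: eq_bigr=> k _.
by rewrite !mxE rmorphM mulrC.
Qed.

Lemma dag_delta n (a : 'I_n) : dag (delta_mx a 0 : 'cV[C]_n) = delta_mx 0 a.
Proof. by apply/matrixP=> i j; rewrite !mxE conjc_nat andbC. Qed.

Lemma conj_ge0 (x : C) : 0 <= conjc x * x.
Proof. by rewrite mulrC -sqr_normc exprn_ge0. Qed.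

Lemma conj_eq0 (x : C) : (conjc x * x == 0) = (x == 0).
Proof. by rewrite mulf_eq0 conjc_eq0 orbb. Qed.

Lemma sum_tens (V : zmodType) m n (F : 'I_(m * n) -> V) :
  \sum_r F r = \sum_(i < m) \sum_(j < n) F (mxtens_index (i, j)).
Proof.
rewrite pair_bigA /= (reindex (@mxtens_index m n)) /=; last first.
  by exists (@mxtens_unindex m n) => x _; rewrite (mxtens_indexK, mxtens_unindexK).
by apply: eq_bigr => -[i j].
Qed.

Section Blk.
Variables (d n : nat).

Lemma blkE (a b : 'I_n) (X : 'M[C]_(d * n)) i j :
  blk a b X i j = X (mxtens_index (i, a)) (mxtens_index (j, b)).
Proof. by rewrite mxE. Qed.

Lemma blkD a b (X Y : 'M[C]_(d * n)) : blk a b (X + Y) = blk a b X + blk a b Y.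
Proof. by apply/matrixP=> i j; rewrite !mxE. Qed.

Lemma blk0 a b : blk a b (0 : 'M[C]_(d * n)) = 0.
Proof. by apply/matrixP=> i j; rewrite !mxE. Qed.

Lemma blkZ a b c (X : 'M[C]_(d * n)) : blk a b (c *: X) = c *: blk a b X.
Proof. by apply/matrixP=> i j; rewrite !mxE. Qed.

Lemma blk_sum a b m (F : 'I_m -> 'M[C]_(d * n)) :
  blk a b (\sum_(k < m) F k) = \sum_(k < m) blk a b (F k).
Proof. exact: (big_morph _ (blkD a b) (blk0 a b)). Qed.

Lemma blk_tens a b c e (A : 'M[C]_d) :
  blk a b (A *t (delta_mx c e : 'M[C]_n)) = ((c == a) && (e == b))%:R *: A.
Proof.
apply/matrixP=> i j; rewrite !mxE !mxtens_indexK /= mulrC.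
by rewrite [a == c]eq_sym [b == e]eq_sym.
Qed.

Lemma blk_ampl (L : 'M[C]_d -> 'M[C]_d) a b (X : 'M[C]_(d * n)) :
  blk a b (ampl L X) = L (blk a b X).
Proof.
rewrite /ampl blk_sum (bigD1 a) //= [X in _ + X]big1 ?addr0; last first.
  move=> c /negPf ca; rewrite blk_sum big1 // => e _.
  by rewrite blk_tens ca /= scale0r.
rewrite blk_sum (bigD1 b) //= [X in _ + X]big1 ?addr0; last first.
  by move=> e /negPf eb; rewrite blk_tens eb andbF scale0r.
by rewrite blk_tens !eqxx scale1r.
Qed.

Lemma blk_ext (X Y : 'M[C]_(d * n)) :
  (forall a b, blk a b X = blk a b Y) -> X = Y.
Proof.
move=> H; apply/matrixP=> r s.
case: (mxtens_indexP r) => i a; case: (mxtens_indexP s) => j b.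
by move: (H a b) => /matrixP/(_ i j); rewrite !mxE.
Qed.

Lemma tr_blk (X : 'M[C]_(d * n)) : \tr X = \sum_(a < n) \tr (blk a a X).
Proof.
rewrite /mxtrace sum_tens exchange_big; apply: eq_bigr => a _.
by apply: eq_bigr => i _; rewrite mxE.
Qed.

End Blk.

Lemma dagK m n (A : 'M[C]_(m, n)) : dag (dag A) = A.
Proof. by apply/matrixP=> i j; rewrite !mxE conjcK. Qed.

Lemma mx11M (P S : 'M[C]_1) : (P *m S) 0 0 = P 0 0 * S 0 0.
Proof. by rewrite mxE big_ord1. Qed.

Definition norm2 m (v : 'cV[C]_m) : C := (dag v *m v) 0 0.

Lemma norm2E m (v : 'cV[C]_m) : norm2 v = \sum_k conjc (v k 0) * v k 0.
Proof. by rewrite /norm2 mxE; apply: eq_bigr => k _; rewrite !mxE. Qed.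

Lemma norm2_ge0 m (v : 'cV[C]_m) : 0 <= norm2 v.
Proof. by rewrite norm2E sumr_ge0 // => k _; apply: conj_ge0. Qed.

Lemma norm2_eq0 m (v : 'cV[C]_m) : norm2 v = 0 -> v = 0.
Proof.
rewrite norm2E => /eqP; rewrite psumr_eq0 => [H|k _]; last exact: conj_ge0.
apply/matrixP=> k z; rewrite ord1 mxE; apply/eqP; rewrite -conj_eq0.
by move/allP: H => /(_ k (mem_index_enum _)).
Qed.

Lemma tr_proj m (v : 'cV[C]_m) : \tr (proj v) = norm2 v.
Proof. by rewrite /proj mxtrace_mulC /mxtrace big_ord1. Qed.

Lemma psd_scale_proj m c (v : 'cV[C]_m) : 0 <= c -> psd (c *: proj v).
Proof.
move=> c0 u; rewrite /proj -scalemxAr -scalemxAl mxE.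
rewrite (mulmxA (dag u)) -(mulmxA (dag u *m v)) mx11M.
have -> : dag v *m u = dag (dag u *m v) by rewrite dagM dagK.
rewrite !mxE; apply: mulr_ge0 => //; rewrite mulrC; exact: conj_ge0.
Qed.

Lemma density_proj m (v : 'cV[C]_m) : dag v *m v = 1 -> density (proj v).
Proof.
move=> h; split; first by rewrite -[proj v]scale1r; apply: psd_scale_proj.
by rewrite tr_proj /norm2 h mxE.
Qed.

Section Lin.
Variable d : nat.
Implicit Types L K : 'M[C]_d -> 'M[C]_d.

Lemma lin0 L : linear_map L -> L 0 = 0.
Proof.
move=> H; have h := H 1 0 0; rewrite scaler0 addr0 scale1r in h.
by apply: (addrI (L 0)); rewrite addr0 -h.
Qed.

Lemma linD L : linear_map L -> forall A B, L (A + B) = L A + L B.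
Proof. by move=> H A B; have := H 1 A B; rewrite !scale1r. Qed.

Lemma linZ L : linear_map L -> forall c A, L (c *: A) = c *: L A.
Proof. by move=> H c A; have := H c A 0; rewrite !addr0 lin0 // addr0. Qed.

Lemma linB L : linear_map L -> forall A B, L (A - B) = L A - L B.
Proof. by move=> H A B; rewrite linD // -scaleN1r linZ // scaleN1r. Qed.

Lemma linN L : linear_map L -> forall A, L (- A) = - L A.
Proof. by move=> H A; rewrite -scaleN1r linZ // scaleN1r. Qed.

Lemma lin_sum L : linear_map L -> forall m (F : 'I_m -> 'M[C]_d),
  L (\sum_(k < m) F k) = \sum_(k < m) L (F k).
Proof. by move=> H m F; apply: (big_morph _ (linD H) (lin0 H)). Qed.

Lemma polar_id (j ua va cub cvb : C) : j * j = -1 ->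
  (ua + va) * (cub + cvb) - ua * cub - va * cvb
  + j * ((ua + j * va) * (cub + - j * cvb) - ua * cub - va * cvb)
  = 2 * (ua * cvb).
Proof.
move=> hj.
have -> : (ua + va) * (cub + cvb) - ua * cub - va * cvb
  + j * ((ua + j * va) * (cub + - j * cvb) - ua * cub - va * cvb)
  = 2 * (ua * cvb) + (j * j + 1) * (va * cub - ua * cvb - j * va * cvb) by ring.
by rewrite hj addNr mul0r addr0.
Qed.

Lemma polar (u v : 'cV[C]_d) :
  2%:R *: (u *m dag v) = (proj (u + v) - proj u - proj v)
     + 'i *: (proj (u + 'i *: v) - proj u - proj v).
Proof.
apply/matrixP=> a b; rewrite !mxE !big_ord1 !mxE.
rewrite !rmorphD !rmorphM /=.
have -> : (Complex 0 (-1) : C) = - 'i.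
  by apply/eqP; rewrite eq_complex /= ?oppr0 ?eqxx.
by rewrite polar_id // -expr2 sqr_i.
Qed.

Lemma lin_ext L K : linear_map L -> linear_map K ->
  (forall rho, density rho -> L rho = K rho) -> forall X, L X = K X.
Proof.
move=> hL hK H.
have Pp : forall v : 'cV[C]_d, L (proj v) = K (proj v).
  move=> v; have [/norm2_eq0 ->|t0] := eqVneq (norm2 v) 0.
    by rewrite /proj mul0mx !lin0.
  have tp : 0 < norm2 v by rewrite lt0r t0 norm2_ge0.
  have -> : proj v = norm2 v *: ((norm2 v)^-1 *: proj v).
    by rewrite scalerA divff // scale1r.
  rewrite linZ // [in RHS]linZ // H //; split.
    by apply: psd_scale_proj; rewrite invr_ge0 norm2_ge0.
  by rewrite mxtraceZ tr_proj mulVf.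
have Puv : forall u v : 'cV[C]_d, L (u *m dag v) = K (u *m dag v).
  move=> u v; have two0 : (2%:R : C) != 0 by rewrite pnatr_eq0.
  have -> : u *m dag v = 2%:R^-1 *: (2%:R *: (u *m dag v)).
    by rewrite scalerA mulVf // scale1r.
  rewrite (linZ hL) (linZ hK) polar.
  by rewrite !(linD hL, linN hL, linZ hL) !(linD hK, linN hK, linZ hK) !Pp.
move=> X; rewrite [X]matrix_sum_delta !lin_sum //; apply: eq_bigr => a _.
rewrite !lin_sum //; apply: eq_bigr => b _.
rewrite (linZ hL) (linZ hK).
by rewrite -(mul_delta_mx (0 : 'I_1)) -dag_delta Puv.
Qed.

End Lin.

Section Kraus.
Variable d : nat.

Definition kv (M : 'M[C]_d) (v : 'cV[C]_(d * d)) : 'cV[C]_(d * d) :=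
  \col_r (\sum_k M (@mxtens_unindex d d r).1 k
           * v (mxtens_index (k, (@mxtens_unindex d d r).2)) 0).

Lemma blk_proj_kv M v a b :
  blk a b (proj (kv M v)) = M *m blk a b (proj v) *m dag M.
Proof.
apply/matrixP=> i j; rewrite !mxE big_ord1 !mxE !mxtens_indexK /=.
rewrite rmorph_sum mulr_sumr; apply: eq_bigr => l _.
rewrite [(M *m _) i l]mxE !mulr_suml; apply: eq_bigr => k _.
rewrite !mxE big_ord1 !mxE !rmorphM /=; ring.
Qed.

End Kraus.

Lemma psd_sum N m (c : 'I_m -> C) (S : 'I_m -> 'M[C]_N) :
  (forall i, 0 <= c i) -> (forall i, psd (S i)) -> psd (\sum_i c i *: S i).
Proof.
move=> c0 hS u; rewrite mulmx_sumr mulmx_suml summxE sumr_ge0 // => i _.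
rewrite -scalemxAr -scalemxAl mxE; apply: mulr_ge0 => //; exact: hS.
Qed.

Lemma density_comb N m (p : 'I_m -> R) (S : 'I_m -> 'M[C]_N) :
  (forall i, 0 <= p i) -> \sum_i p i = 1 -> (forall i, density (S i)) ->
  density (\sum_i (p i)%:C *: S i).
Proof.
move=> p0 p1 hS; split.
  by apply: psd_sum => [i|i]; [rewrite lecE /= eqxx p0 | case: (hS i)].
rewrite raddf_sum /=.
under eq_bigr => i _ do rewrite mxtraceZ (proj2 (hS i)) mulr1.
by rewrite -rmorph_sum p1.
Qed.

Lemma convex_comb N (E : 'M[C]_N -> R) : convex_roof E ->
  forall m (p : 'I_m -> R) (S : 'I_m -> 'M[C]_N),
  (forall i, 0 <= p i) -> \sum_i p i = 1 -> (forall i, density (S i)) ->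
  E (\sum_i (p i)%:C *: S i) <= \sum_i p i * E (S i).
Proof.
move=> hE m p S p0 p1 hS.
have : forall i : 'I_m, exists x : {n : nat & (('I_n -> R) * ('I_n -> 'cV[C]_N))%type},
   pure_decomp (S i) (tagged x).1 (tagged x).2 /\
   E (S i) = decomp_value E (tagged x).1 (tagged x).2.
  move=> i; have [_ [n [q [psi [h1 h2]]]]] := hE _ (hS i).
  by exists (Tagged (fun n => (('I_n -> R) * ('I_n -> 'cV[C]_N))%type) (q, psi)).
move=> /boolp.choice [f hf].
pose T := {i : 'I_m & 'I_(tag (f i))}.
pose P' (x : T) := p (tag x) * (tagged (f (tag x))).1 (tagged x).
pose Psi (x : T) := (tagged (f (tag x))).2 (tagged x).
have sumT : forall (V : zmodType) (G : T -> V),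
   \sum_(k < #|{: T}|) G (enum_val k) = \sum_i \sum_(k : 'I_(tag (f i))) G (Tagged _ k).
  move=> V G; rewrite -(big_enum_val (A := predT)) /=.
  by rewrite (sig_big_dep xpredT (fun _ _ => true) (fun i (k : 'I_(tag (f i))) => G (Tagged _ k))) /=; apply: eq_bigr => -[i k].
have [hd _] := hE _ (density_comb p0 p1 hS).
have hpd : pure_decomp (\sum_i (p i)%:C *: S i)
    (fun k : 'I_#|{: T}| => P' (enum_val k)) (fun k : 'I_#|{: T}| => Psi (enum_val k)).
  split.
  - move=> k; apply: mulr_ge0 => //.
    by have [[q0 _ _ _] _] := hf (tag (enum_val k)).
  - rewrite sumT -p1; apply: eq_bigr => i _.
    have [[_ q1 _ _] _] := hf i.
    by rewrite /P' /= -mulr_sumr q1 mulr1.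
  - by move=> k; have [[_ _ qu _] _] := hf (tag (enum_val k)); apply: qu.
  - rewrite (sumT _ (fun x => (P' x)%:C *: proj (Psi x))); apply: eq_bigr => i _.
    have [[_ _ _ qS] _] := hf i.
    rewrite [in LHS]qS scaler_sumr; apply: eq_bigr => k _.
    by rewrite /P' /Psi /= scalerA rmorphM.
apply: le_trans (hd _ _ _ hpd) _; rewrite le_eqVlt; apply/orP; left; apply/eqP.
rewrite /decomp_value (sumT _ (fun x => P' x * E (proj (Psi x)))); apply: eq_bigr => i _.
have [_ ->] := hf i; rewrite /decomp_value mulr_sumr; apply: eq_bigr => k _.
by rewrite /P' /Psi /= mulrA.
Qed.

Lemma eq_ord1 (x y : 'I_1) : (x == y) = true.
Proof. by rewrite [x]ord1 [y]ord1 eqxx. Qed.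

Section Ampl.
Variable d : nat.

Lemma ampl_scale (L : 'M[C]_d -> 'M[C]_d) c (X : 'M[C]_(d * d)) :
  linear_map L -> ampl L (c *: X) = c *: ampl L X.
Proof.
move=> hL; apply: blk_ext => a b.
by rewrite blkZ !blk_ampl blkZ (linZ hL).
Qed.

Lemma tr_ampl (L : 'M[C]_d -> 'M[C]_d) (X : 'M[C]_(d * d)) :
  trace_preserving L -> \tr (ampl L X) = \tr X.
Proof.
move=> hT; rewrite !tr_blk; apply: eq_bigr => a _.
by rewrite blk_ampl hT.
Qed.

Lemma density_ampl (L : 'M[C]_d -> 'M[C]_d) (X : 'M[C]_(d * d)) :
  CPT L -> density X -> density (ampl L X).
Proof.
move=> [_ hCP hT] [hp ht]; split; first exact: hCP.
by rewrite tr_ampl.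
Qed.

Lemma phiplusE (k a : 'I_d) : phiplus R d (mxtens_index (k, a)) 0
  = ((Num.sqrt (d%:R : R))^-1)%:C * (k == a)%:R.
Proof.
rewrite mxE summxE; congr (_ * _).
rewrite (bigD1 k) //= big1 ?addr0 => [|j /negPf jk].
  by rewrite !mxE !mxtens_indexK /= eqxx /= (eq_ord1 (Ordinal _)) mul1r andbT eq_sym.
by rewrite !mxE !mxtens_indexK /= [k == j]eq_sym jk mul0r.
Qed.

Lemma norm2_phiplus : (0 < d)%N -> norm2 (phiplus R d) = 1.
Proof.
move=> d0; rewrite norm2E sum_tens.
under eq_bigr => k _ do under eq_bigr => a _ do rewrite phiplusE.
set s := ((Num.sqrt (d%:R : R))^-1)%:C.
have inner : forall k : 'I_d,
    \sum_(a < d) (conjc (s * (k == a)%:R) * (s * (k == a)%:R)) = s * s.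
  move=> k; rewrite (bigD1 k) //= big1 ?addr0 => [|a /negPf ak]; last first.
    by rewrite eq_sym ak mulr0 rmorph0 mul0r.
  by rewrite eqxx mulr1 /s; congr (_ * _); apply/eqP; rewrite eq_complex /= oppr0 !eqxx.
under eq_bigr => k _ do rewrite inner.
rewrite sumr_const card_ord -mulr_natl /s -rmorphM.
rewrite -(rmorph_nat (real_complex R)) -rmorphM /= -expr2 exprVn sqr_sqrtr ?ler0n //.
by rewrite mulfV // pnatr_eq0 -lt0n.
Qed.

End Ampl.

Local Notation ReC := (@complex.Re R).

Lemma conj_real (x : R) : conjc (x%:C) = x%:C :> C.
Proof. by apply/eqP; rewrite eq_complex /= oppr0 !eqxx. Qed.

Lemma ge0_real (x : C) : 0 <= x -> x = (ReC x)%:C.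
Proof.
case: x => a b; rewrite lecE /= => /andP[/eqP b0 _].
by apply/eqP; rewrite eq_complex /= b0 !eqxx.
Qed.

Lemma ReC_ge0 (x : C) : 0 <= x -> 0 <= ReC x.
Proof. by case: x => a b; rewrite lecE /= => /andP[_ ->]. Qed.

Lemma unit_scale N (w : 'cV[C]_N) : ReC (norm2 w) != 0 ->
  let c := real_complex R ((Num.sqrt (ReC (norm2 w)))^-1) in
  dag (c *: w) *m (c *: w) = 1 /\ proj w = (ReC (norm2 w))%:C *: proj (c *: w).
Proof.
move=> p0 c.
have hp : 0 <= ReC (norm2 w) by apply: ReC_ge0; apply: norm2_ge0.
have cc : conjc c * c = ((ReC (norm2 w))^-1)%:C.
  by rewrite /c conj_real -rmorphM /= -expr2 exprVn sqr_sqrtr.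
split.
  rewrite dagZ -scalemxAl -scalemxAr scalerA cc.
  apply/matrixP=> i j; rewrite !ord1 [in RHS]mxE [LHS]mxE.
  change ((dag w *m w) 0 0) with (norm2 w).
  by rewrite [norm2 w in X in _ * X]ge0_real ?norm2_ge0 // -rmorphM /= mulVf.
rewrite /proj dagZ -scalemxAl -scalemxAr !scalerA -mulrA [c * _]mulrC cc -rmorphM /=.
by rewrite mulfV // scale1r.
Qed.

Lemma norm2_unit N (v : 'cV[C]_N) : norm2 v = 1 -> dag v *m v = 1.
Proof. by move=> h; apply/matrixP=> i j; rewrite !ord1 [RHS]mxE; exact: h. Qed.

End Q.

Theorem theorem1 (R : realType) (d : nat) (d_gt0 : (0 < d)%N)
  (E : 'M[R[i]]_(d * d) -> R)
  (E_roof : convex_roof E) (E_mono : local_monotone E)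
  (E1 E2 : 'M[R[i]]_d -> 'M[R[i]]_d) :
  CPT E1 -> CPT E2 ->
  (Esharp E (choi E1) < (E (choi E2))%:E)%E ->
  ~ classical_memory E1 E2.
Proof.
move=> [lin1 cp1 tp1] hE2 Hlt [n [M [Phi [hK hPhi hE2']]]].
have [lin2 _ _] := hE2.
pose K1 := fun Y : 'M[R[i]]_d => \sum_(i < n) M i *m Y *m dag (M i).
have linK1 : linear_map K1.
  move=> c A B; rewrite /K1 scaler_sumr -big_split /=; apply: eq_bigr => i _.
  by rewrite mulmxDr mulmxDl -scalemxAr -scalemxAl.
have E1E : forall X, E1 X = K1 X := lin_ext lin1 linK1 hK.
pose K2 := fun Y : 'M[R[i]]_d => \sum_(i < n) Phi i (M i *m Y *m dag (M i)).
have linK2 : linear_map K2.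
  move=> c A B; rewrite /K2 scaler_sumr -big_split /=; apply: eq_bigr => i _.
  have [hl _ _] := hPhi i.
  by rewrite mulmxDr mulmxDl -scalemxAr -scalemxAl; apply: hl.
have E2E : forall X, E2 X = K2 X := lin_ext lin2 linK2 hE2'.
pose w i := kv (M i) (phiplus R d).
have chi1E : choi E1 = \sum_i proj (w i).
  apply: blk_ext => a b; rewrite /choi blk_ampl E1E /K1 blk_sum.
  by apply: eq_bigr => i _; rewrite blk_proj_kv.
have chi2E : choi E2 = \sum_i ampl (Phi i) (proj (w i)).
  apply: blk_ext => a b; rewrite /choi blk_ampl E2E /K2 blk_sum.
  by apply: eq_bigr => i _; rewrite blk_ampl blk_proj_kv.
pose p i := complex.Re (norm2 (w i)).
have p0 : forall i, 0 <= p i by move=> i; apply: ReC_ge0; apply: norm2_ge0.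
have pC : forall i, real_complex R (p i) = norm2 (w i).
  by move=> i; rewrite [in RHS](ge0_real (norm2_ge0 (w i))).
have p1 : \sum_i p i = 1.
  apply: (@complexI R); rewrite rmorph_sum rmorph1 /=.
  under eq_bigr => i _ do rewrite pC -tr_proj.
  by rewrite -raddf_sum /= -chi1E /choi tr_ampl // tr_proj norm2_phiplus.
pose psi i := if p i == 0 then phiplus R d
              else real_complex R ((Num.sqrt (p i))^-1) *: w i.
have hpsi : forall i, dag (psi i) *m psi i = 1 /\
                      proj (w i) = real_complex R (p i) *: proj (psi i).
  move=> i; rewrite /psi; case: eqP => [pi0|/eqP pi0].
    split; first by apply: norm2_unit; apply: norm2_phiplus.
    have -> : w i = 0 by apply: norm2_eq0; rewrite -pC pi0.
    by rewrite pi0 scale0r /proj mul0mx.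
  exact: unit_scale.
have hd1 : pure_decomp (choi E1) p psi.
  split=> //; first by move=> i; exact: (hpsi i).1.
  by rewrite chi1E; apply: eq_bigr => i _; exact: (hpsi i).2.
have ub : ((decomp_value E p psi)%:E <= Esharp E (choi E1))%E.
  by apply: ereal_sup_ubound; exists n, p, psi.
pose sig i := ampl (Phi i) (proj (psi i)).
have sigd : forall i, density (sig i).
  by move=> i; apply: density_ampl; [exact: hPhi | exact: density_proj (hpsi i).1].
have chi2E' : choi E2 = \sum_i real_complex R (p i) *: sig i.
  rewrite chi2E; apply: eq_bigr => i _; rewrite (hpsi i).2 ampl_scale //.
  by have [] := hPhi i.
have le1 : E (choi E2) <= \sum_i p i * E (sig i).
  by rewrite chi2E'; apply: convex_comb.
have le2 : \sum_i p i * E (sig i) <= decomp_value E p psi.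
  rewrite /decomp_value; apply: ler_sum => i _; apply: ler_wpM2l => //.
  by apply: E_mono; [exact: hPhi | exact: density_proj (hpsi i).1].
have h3 : ((E (choi E2))%:E <= Esharp E (choi E1))%E.
  by apply: le_trans ub; rewrite lee_fin; apply: le_trans le2.
by have := lt_le_trans Hlt h3; rewrite ltxx.
Qed.
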